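(* Let $H_A,H_B$ be finite-dimensional complex Hilbert spaces, $h_{1A},h_{2A}$ subspaces of $H_A$, $h_{1B},h_{2B}$ subspaces of $H_B$, and $h_1=h_{1A}\otimes h_{1B}$, $h_2=h_{2A}\otimes h_{2B}$. Suppose $[\Pi_A(h_{1A}),\Pi_A(h_{2A})]=0$ and $[\Pi_B(h_{1B}),\Pi_B(h_{2B})]=0$. Then for every unit vector $\ket s\in H_A\otimes H_B$, $\bra s\Pi(h_1\vee h_2)\ket s\le \bra s\,\Pi_A(h_{1A})\otimes\Pi_B(h_{1B})\,\ket s+\bra s\,\Pi_A(h_{2A})\otimes\Pi_B(h_{2B})\,\ket s.$
   Context: $\Pi_A(k)$, $\Pi_B(k)$, $\Pi(k)$ denote orthogonal projectors onto a subspace $k$ of $H_A$, $H_B$, $H_A\otimes H_B$ respectively. $h\vee h'=\mathrm{span}(h\cup h')$. For subspaces $k_A\subseteq H_A$, $k_B\subseteq H_B$, $k_A\otimes k_B$ is the subspace spanned by all $\ket a\otimes\ket b$, $\ket a\in k_A$, $\ket b\in k_B$. *)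

(* Defs.v *)
From HB Require Import structures.
From mathcomp Require Import all_boot all_order all_algebra.
Set Implicit Arguments. Unset Strict Implicit. Unset Printing Implicit Defensive.
Import Order.TTheory GRing.Theory Num.Theory.
Local Open Scope ring_scope.

(* Finite-dimensional Hilbert spaces H = C^n, vectors are ROW vectors 'rV[C]_n,
   a subspace is the row space of a matrix (mxalgebra convention),
   H_A (x) H_B = C^(m*n), with the pair index (i,j) encoded by mxvec_index. *)

Section Defs.
Variable C : numClosedFieldType.

Definition adjmx m n (A : 'M[C]_(m, n)) : 'M[C]_(n, m) := (map_mx Num.conj A)^T.

(* components of a pair index k : 'I_(m*n), inverse of mxvec_index *)
Definition idx1 m n (k : 'I_(m * n)) : 'I_m :=
  (enum_val (cast_ord (esym (mxvec_cast m n)) k)).1.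
Definition idx2 m n (k : 'I_(m * n)) : 'I_n :=
  (enum_val (cast_ord (esym (mxvec_cast m n)) k)).2.

(* For subspaces given as row spaces
   of U and V, the row space of tensmx U V is U (x) V = span{a (x) b};
   for operators it is the operator tensor product A (x) B. *)
Definition tensmx m1 n1 m2 n2 (A : 'M[C]_(m1, n1)) (B : 'M[C]_(m2, n2))
  : 'M[C]_(m1 * m2, n1 * n2) :=
  \matrix_(i, j) (A (idx1 i) (idx1 j) * B (idx2 i) (idx2 j)).

Definition orth_proj n (U P : 'M[C]_n) : Prop :=
  [/\ P *m P = P, adjmx P = P & (P == U)%MS].

Definition expect n (s : 'rV[C]_n) (M : 'M[C]_n) : C :=
  (s *m M *m adjmx s) 0 0.

Definition unit_vec n (s : 'rV[C]_n) : Prop := (s *m adjmx s) 0 0 = 1.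

End Defs.

(* Main.v *)
Require Import Defs.
From HB Require Import structures.
From mathcomp Require Import all_boot all_order all_algebra.
From mathcomp Require Import ring.
Import Order.TTheory GRing.Theory Num.Theory.
Set Implicit Arguments. Unset Strict Implicit.
Local Open Scope ring_scope.

Section Aux.
Variable C : numClosedFieldType.

Lemma sum_idx p q (F : 'I_p -> 'I_q -> C) :
  \sum_(k < p * q) F (idx1 k) (idx2 k) = \sum_(a < p) \sum_(b < q) F a b.
Proof.
rewrite pair_big /=.
rewrite (reindex (fun k : 'I_(p * q) => enum_val (cast_ord (esym (mxvec_cast p q)) k))) //=.
exists (fun x => cast_ord (mxvec_cast p q) (enum_rank x)) => x _.
  by rewrite enum_valK cast_ordKV.
by rewrite cast_ordK enum_rankK.
Qed.

Lemma tensmx_mul m1 n1 p1 m2 n2 p2 (A : 'M[C]_(m1, n1)) (B : 'M[C]_(m2, n2))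
  (A' : 'M[C]_(n1, p1)) (B' : 'M[C]_(n2, p2)) :
  tensmx A B *m tensmx A' B' = tensmx (A *m A') (B *m B').
Proof.
apply/matrixP => i j; rewrite !mxE.
pose F := fun a b => (A (idx1 i) a * B (idx2 i) b) * (A' a (idx1 j) * B' b (idx2 j)).
transitivity (\sum_k F (idx1 k) (idx2 k)).
  by apply: eq_bigr => k _; rewrite ?mxE /F; ring.
rewrite sum_idx /F.
rewrite big_distrl /=; apply: eq_bigr => a _.
rewrite big_distrr /=; apply: eq_bigr => b _.
rewrite ?mxE; ring.
Qed.

Lemma adjmxM m n p (A : 'M[C]_(m, n)) (B : 'M[C]_(n, p)) :
  adjmx (A *m B) = adjmx B *m adjmx A.
Proof. by rewrite /adjmx map_mxM trmx_mul. Qed.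

Lemma adjmxD m n (A B : 'M[C]_(m, n)) : adjmx (A + B) = adjmx A + adjmx B.
Proof. by apply/matrixP => i j; rewrite !mxE rmorphD. Qed.

Lemma adjmxN m n (A : 'M[C]_(m, n)) : adjmx (- A) = - adjmx A.
Proof. by apply/matrixP => i j; rewrite !mxE rmorphN. Qed.

Lemma adjmx_tens m1 n1 m2 n2 (A : 'M[C]_(m1, n1)) (B : 'M[C]_(m2, n2)) :
  adjmx (tensmx A B) = tensmx (adjmx A) (adjmx B).
Proof. by apply/matrixP => i j; rewrite !mxE rmorphM. Qed.


Lemma proj_unique n (U P P' : 'M[C]_n) :
  orth_proj U P -> orth_proj U P' -> P = P'.
Proof.
case=> PP aP /andP[sPU sUP]; case=> PP' aP' /andP[sP'U sUP'].
have [D eD] : exists D, P' = D *m P by apply/submxP; exact: submx_trans sP'U sUP.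
have [E eE] : exists E, P = E *m P' by apply/submxP; exact: submx_trans sPU sUP'.
have h1 : P' *m P = P' by rewrite {1}eD -mulmxA PP -eD.
have h2 : P *m P' = P by rewrite {1}eE -mulmxA PP' -eE.
by rewrite -aP' -h1 adjmxM aP aP' h2.
Qed.

Lemma expect_ge0 n (s : 'rV[C]_n) (W : 'M[C]_n) :
  W *m W = W -> adjmx W = W -> 0 <= expect s W.
Proof.
move=> WW aW; rewrite /expect.
have -> : s *m W *m adjmx s = (s *m W) *m adjmx (s *m W).
  by rewrite adjmxM aW mulmxA -(mulmxA s W W) WW.
rewrite mxE; apply: sumr_ge0 => i _; rewrite !mxE; exact: mul_conjC_ge0.
Qed.

Lemma tens_sub m1 n1 m2 n2 k1 k2 (A : 'M[C]_(m1, n1)) (A' : 'M[C]_(k1, n1))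
  (B : 'M[C]_(m2, n2)) (B' : 'M[C]_(k2, n2)) :
  (A <= A')%MS -> (B <= B')%MS -> (tensmx A B <= tensmx A' B')%MS.
Proof.
move=> /submxP[D ->] /submxP[E ->]; rewrite -tensmx_mul; exact: submxMl.
Qed.

Lemma expectD n (s : 'rV[C]_n) (A B : 'M[C]_n) :
  expect s (A + B) = expect s A + expect s B.
Proof. by rewrite /expect mulmxDr mulmxDl mxE. Qed.

Lemma expectN n (s : 'rV[C]_n) (A : 'M[C]_n) :
  expect s (- A) = - expect s A.
Proof. by rewrite /expect mulmxN mulNmx mxE. Qed.

End Aux.

Theorem mainTheorem4 (C : numClosedFieldType) (m n : nat)
  (h1A h2A : 'M[C]_m) (h1B h2B : 'M[C]_n)
  (P1A P2A : 'M[C]_m) (P1B P2B : 'M[C]_n) (P12 : 'M[C]_(m * n)) :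
  orth_proj h1A P1A -> orth_proj h2A P2A ->
  orth_proj h1B P1B -> orth_proj h2B P2B ->
  orth_proj (tensmx h1A h1B + tensmx h2A h2B)%MS P12 ->
  P1A *m P2A = P2A *m P1A ->
  P1B *m P2B = P2B *m P1B ->
  forall s : 'rV[C]_(m * n), unit_vec s ->
    expect s P12 <= expect s (tensmx P1A P1B) + expect s (tensmx P2A P2B).
Proof.
move=> h1 h2 h3 h4 h12 cA cB s _.
case: h1 => e1 a1 /andP[s1 t1]; case: h2 => e2 a2 /andP[s2 t2].
case: h3 => e3 a3 /andP[s3 t3]; case: h4 => e4 a4 /andP[s4 t4].
set Q1 := tensmx P1A P1B; set Q2 := tensmx P2A P2B.
have Q11 : Q1 *m Q1 = Q1 by rewrite tensmx_mul e1 e3.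
have Q22 : Q2 *m Q2 = Q2 by rewrite tensmx_mul e2 e4.
have aQ1 : adjmx Q1 = Q1 by rewrite adjmx_tens a1 a3.
have aQ2 : adjmx Q2 = Q2 by rewrite adjmx_tens a2 a4.
have cQ : Q2 *m Q1 = Q1 *m Q2 by rewrite !tensmx_mul cA cB.
pose R := Q1 + Q2 - Q1 *m Q2.
have RQ1 : R *m Q1 = Q1.
  rewrite /R !mulmxDl mulNmx Q11 cQ -mulmxA cQ mulmxA Q11.
  by rewrite -addrA subrr addr0.
have RQ2 : R *m Q2 = Q2.
  by rewrite /R !mulmxDl mulNmx Q22 -mulmxA Q22 addrAC subrr add0r.
have RR : R *m R = R.
  by rewrite {2}/R !mulmxDr mulmxN RQ1 RQ2 mulmxA RQ1.
have aR : adjmx R = R.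
  by rewrite /R !adjmxD adjmxN adjmxM aQ1 aQ2 cQ.
have oR : orth_proj (tensmx h1A h1B + tensmx h2A h2B)%MS R.
  split=> //; apply/andP; split.
    have sQ1 : (Q1 <= tensmx h1A h1B + tensmx h2A h2B)%MS.
      exact: submx_trans (tens_sub s1 s3) (addsmxSl _ _).
    have sQ2 : (Q2 <= tensmx h1A h1B + tensmx h2A h2B)%MS.
      exact: submx_trans (tens_sub s2 s4) (addsmxSr _ _).
    rewrite /R; apply: addmx_sub; first exact: addmx_sub.
    rewrite ((eqmx_opp _).2 _ _).1.
    exact: submx_trans (submxMl _ _) sQ2.
  rewrite addsmx_sub; apply/andP; split.
    apply: submx_trans (tens_sub t1 t3) _; rewrite -/Q1.
    have e : Q1 *m R = Q1 by rewrite -{1}aQ1 -aR -adjmxM RQ1 aQ1.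
    by rewrite -{1}e submxMl.
  apply: submx_trans (tens_sub t2 t4) _; rewrite -/Q2.
  have e : Q2 *m R = Q2 by rewrite -{1}aQ2 -aR -adjmxM RQ2 aQ2.
  by rewrite -{1}e submxMl.
rewrite (proj_unique h12 oR) /R !expectD expectN.
rewrite gerBl; apply: expect_ge0.
  by rewrite mulmxA -(mulmxA Q1 Q2 Q1) cQ (mulmxA Q1 Q1 Q2) Q11 -mulmxA Q22.
by rewrite adjmxM aQ1 aQ2 cQ.
Qed.
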